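(* Let $\mu$ be a $(C,\gamma)$-absolutely decaying measure on $\mathbb{R}$, let $K=\operatorname{supp}\mu$, and let $0<\alpha\le\frac14\left(\frac{1}{3C}\right)^{1/\gamma}$. Then for every bi-Lipschitz map $\varphi:\mathbb{R}\to\mathbb{R}$, every integer $b\ge2$ and every $c,y\in\mathbb{T}$, the set $\varphi\big(\pi^{-1}(E(f_{b,c},y))\big)$ is $\alpha$-winning on $K$.
   Context: $\mathbb{T}=\mathbb{R}/\mathbb{Z}$, $\pi:\mathbb{R}\to\mathbb{T}$ the projection. For $b\in\mathbb{Z}_{\ge2}$ and $c\in\mathbb{T}$, $f_{b,c}:\mathbb{T}\to\mathbb{T}$ is $x\mapsto bx+c$. For $f:\mathbb{T}\to\mathbb{T}$ and $y\in\mathbb{T}$, $E(f,y)=\{x\in\mathbb{T}: y\notin\overline{\{f^n(x):n\in\mathbb{N}\}}\}$. $B(x,\rho)$ denotes the closed ball. A locally finite Borel measure $\mu$ on $\mathbb{R}$ is $(C,\gamma)$-absolutely decaying if there is $\rho_0>0$ such that for all $0<\rho\le\rho_0$, $x\in\operatorname{supp}\mu$, $y\in\mathbb{R}$, $\varepsilon>0$: $\mu(B(x,\rho)\cap B(y,\varepsilon\rho))<C\varepsilon^\gamma\mu(B(x,\rho))$. A map $\varphi$ is bi-Lipschitz if there is $L\ge1$ with $L^{-1}\le|\varphi(x)-\varphi(y)|/|x-y|\le L$ for all $x\ne y$. Schmidt's game on a complete metric space $(X,d)$ with parameters $0<\alpha,\beta<1$ and target $S\subset X$: on $X\times\mathbb{R}_+$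 write $(x_2,\rho_2)\le_s(x_1,\rho_1)$ if $\rho_2+d(x_1,x_2)\le\rho_1$. Bob picks $\omega_1=(x_1,\rho_1)$; then Alice and Bob alternately pick $\omega_k'=(x_k',\rho_k')\le_s\omega_k$ with $\rho_k'=\alpha\rho_k$ and $\omega_{k+1}\le_s\omega_k'$ with $\rho_{k+1}=\beta\rho_k'$. The nested closed balls intersect in a point $x_\infty$; Alice wins if $x_\infty\in S$. $S$ is $\alpha$-winning if for every $\beta\in(0,1)$ Alice has a strategy winning against all plays of Bob. For closed $K\subset\mathbb{R}$, $S\subset\mathbb{R}$ is $\alpha$-winning on $K$ if $S\cap K$ is $\alpha$-winning for the game played on $K$ with the induced metric. *)

(* Defs.v *)
From mathcomp Require Import all_boot all_order all_algebra.
From mathcomp Require Import all_classical all_reals all_analysis.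
Set Implicit Arguments.
Unset Strict Implicit.
Unset Printing Implicit Defensive.
Import Order.TTheory GRing.Theory Num.Theory.
Local Open Scope classical_set_scope.
Local Open Scope ring_scope.

Section Defs.
Variable R : realType.

Definition cball (x r : R) : set R := [set z | `|z - x| <= r].

(** Locally finite (Borel) measure: finite on every (closed) ball.
    Measures on [R] in MathComp-Analysis are defined on the Borel
    sigma-algebra of [R]. *)
Definition locally_finite (mu : {measure set R -> \bar R}) : Prop :=
  forall x r : R, (mu (cball x r) < +oo)%E.

Definition msupport (mu : {measure set R -> \bar R}) : set R :=
  [set x | forall r : R, 0 < r -> (0 < mu (cball x r))%E].

Definition abs_decaying (mu : {measure set R -> \bar R}) (C gam : R) : Prop :=
  exists rho0 : R, 0 < rho0 /\
    forall (rho x y eps : R), 0 < rho -> rho <= rho0 -> msupport mu x ->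
      0 < eps ->
      (mu (cball x rho `&` cball y (eps * rho))
        < (C * eps `^ gam)%:E * mu (cball x rho))%E.

Definition bi_Lipschitz (phi : R -> R) : Prop :=
  exists L : R, 1 <= L /\
    forall x y : R, x != y ->
      L^-1 <= `|phi x - phi y| / `|x - y| <= L.

(** The torus T = R/Z is handled through lifts: for u v : R,
    [torus_close u v eps] means d_T(pi u, pi v) < eps, where d_T is the
    quotient metric d_T(pi u, pi v) = min_{k in Z} |u - v - k|. *)
Definition torus_close (u v eps : R) : Prop :=
  exists k : int, `|u - v - k%:~R| < eps.

(** Lift of f_{b,c} : x |-> b x + c to R (c a lift of the translation). *)
Definition fbc (b : nat) (c : R) (x : R) : R := b%:R * x + c.

(** [pi y] lies in the closure of the forward orbit {f^n (pi x) : n in N}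
    of pi x under f_{b, pi c}  (N = {0,1,2,...}). *)
Definition in_orbit_closure (b : nat) (c x y : R) : Prop :=
  forall eps : R, 0 < eps ->
    exists n : nat, torus_close (iter n (fbc b c) x) y eps.

(** pi^{-1}(E(f_{b, pi c}, pi y)) as a subset of R. *)
Definition E_lift (b : nat) (c y : R) : set R :=
  [set x | ~ in_orbit_closure b c x y].

(** formal balls (center, radius); (x2,r2) <=_s (x1,r1) *)
Definition ball_le (w2 w1 : R * R) : Prop := w2.2 + `|w1.1 - w2.1| <= w1.2.

(** A strategy for Alice: from the list of Bob's moves omega_1..omega_k
    (all earlier moves of Alice being determined by the strategy itself),
    it outputs Alice's move omega_k'. *)
Definition strategy := seq (R * R) -> R * R.

(** Alice's answer to Bob's k-th move (index k counted from 0). *)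
Definition alice_move (sigma : strategy) (omega : nat -> R * R) (k : nat) :=
  sigma (mkseq omega k.+1).

Definition bob_legal_upto (K : set R) (beta : R) (sigma : strategy)
    (omega : nat -> R * R) (n : nat) : Prop :=
  K (omega 0).1 /\ 0 < (omega 0).2 /\
  forall j : nat, (j < n)%N ->
    K (omega j.+1).1 /\ ball_le (omega j.+1) (alice_move sigma omega j) /\
    (omega j.+1).2 = beta * (alice_move sigma omega j).2.

Definition alice_legal (K : set R) (alpha beta : R) (sigma : strategy) : Prop :=
  forall (omega : nat -> R * R) (n : nat), bob_legal_upto K beta sigma omega n ->
    K (alice_move sigma omega n).1 /\
    ball_le (alice_move sigma omega n) (omega n) /\
    (alice_move sigma omega n).2 = alpha * (omega n).2.

Definition alice_wins (K : set R) (beta : R) (sigma : strategy) (S : set R)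
    : Prop :=
  forall omega : nat -> R * R, (forall n, bob_legal_upto K beta sigma omega n) ->
    forall x : R, K x -> (forall k, `|x - (omega k).1| <= (omega k).2) -> S x.

(** S is alpha-winning on K (i.e. S `&` K is alpha-winning for the game
    played on K with the induced metric). *)
Definition alpha_winning_on (K : set R) (alpha : R) (S : set R) : Prop :=
  forall beta : R, 0 < beta -> beta < 1 ->
    exists sigma : strategy,
      alice_legal K alpha beta sigma /\ alice_wins K beta sigma (S `&` K).

End Defs.

(* Main.v *)
Require Import Defs.
From mathcomp Require Import all_boot all_order all_algebra.
From mathcomp Require Import all_classical all_reals all_analysis.
From mathcomp Require Import ring lra zify.
Import Order.TTheory GRing.Theory Num.Theory numFieldNormedType.Exports numFieldTopology.Exports.
Local Open Scope classical_set_scope.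
Local Open Scope ring_scope.
Section S.
Variable R : realType.
Variable mu : {measure set R -> \bar R}.
Lemma cball_itv (x r : R) : cball x r = `[x - r, x + r]%classic.
Proof.
apply/seteqP; split => z /=; rewrite /cball /= in_itv /= distrC ler_distlC //.
Qed.
Lemma cball_meas (x r : R) : measurable (cball x r).
Proof. by rewrite cball_itv; exact: measurable_itv. Qed.

Lemma negl_seq (f : R -> set R) (s : seq R) :
  (forall i, i \in s -> mu.-negligible (f i)) ->
  mu.-negligible [set x | exists2 i, i \in s & f i x].
Proof.
elim: s => [_|a s IH H].
  apply: (negligibleS _ (negligible_set0 mu)) => x [i]; by rewrite in_nil.
apply: (negligibleS (A := f a `|` [set x | exists2 i, i \in s & f i x])).
  move=> x [i]; rewrite in_cons => /orP [/eqP -> fx|hs fx]; first by left.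
  by right; exists i.
apply: negligibleU; first by apply: H; rewrite mem_head.
by apply: IH => i hs; apply: H; rewrite in_cons hs orbT.
Qed.

Lemma supp_negl (A : set R) : compact A ->
  (forall z, A z -> ~ msupport mu z) -> mu.-negligible A.
Proof.
move=> cA nA.
have H z : A z -> exists r : R, 0 < r /\ mu (cball z r) = 0%E.
  move=> /nA; rewrite /msupport /= => /existsNP [r /not_implyP [r0 h]].
  exists r; split => //; apply/eqP; rewrite eq_le measure_ge0 andbT.
  by rewrite leNgt; apply/negP.
pose rr z := if pselect (exists r : R, 0 < r /\ mu (cball z r) = 0%E) is left e
  then projT1 (cid e) else 1.
have rrP z : A z -> 0 < rr z /\ mu (cball z (rr z)) = 0%E.
  move=> Az; rewrite /rr; case: pselect => [e|]; last by move=> /(_ (H z Az)).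
  by case: (cid e).
move: cA; rewrite compact_cover => /(_ R A (fun z => ball z (rr z))).
case.
- by move=> i _; exact: ball_open.
- move=> z Az; exists z => //; apply: ballxx; exact: (rrP z Az).1.
move=> D DA AD.
apply: (negligibleS AD).
have N : mu.-negligible [set x | exists2 i, i \in (finmap.enum_fset D) & ball i (rr i) x].
  apply: negl_seq => i iD.
  have [r0 m0] := rrP i (set_mem (DA i iD)).
  exists (cball i (rr i)); split => //; first exact: cball_meas.
  move=> x; rewrite /ball /cball /= => /ltW; by rewrite distrC.
apply: (negligibleS _ N).
by move=> x [i /= iD bx]; exists i.
Qed.

Lemma avoid_pt (C gam al rho0 : R) : locally_finite mu ->
  (forall (rho x y eps : R), 0 < rho -> rho <= rho0 -> msupport mu x ->
      0 < eps ->
      (mu (cball x rho `&` cball y (eps * rho))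
        < (C * eps `^ gam)%:E * mu (cball x rho))%E) ->
  0 < al -> C * (4 * al) `^ gam <= 1 ->
  forall z rho p, msupport mu z -> 0 < rho -> rho <= rho0 ->
  exists w, msupport mu w /\ `|w - z| <= rho / 2 /\ 2 * al * rho <= `|w - p|.
Proof.
move=> lf dec al0 Cal z rho p Kz rho0' rhole.
apply: contrapT => nex.
pose r := 4 * al * (rho / 2).
have er : r = 2 * al * rho by rewrite /r; field.
pose F := (`[z - rho / 2, Num.min (p - r) (z + rho / 2)] `|`
   `[Num.max (p + r) (z - rho / 2), z + rho / 2])%classic.
have cF : compact F by apply: compactU; exact: segment_compact.
have r0 : 0 <= r by rewrite /r; apply: mulr_ge0; [apply: mulr_ge0 => //; apply: ltW|]; lra.
have nF : mu.-negligible F.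
  apply: supp_negl => // w Fw Kw; apply: nex; exists w; split => //.
  rewrite -er.
  case: Fw => /=; rewrite in_itv /= => /andP [h1 h2].
  - move: h2; rewrite le_min => /andP [h2 h3]; split.
      by rewrite ler_distlC; apply/andP; split; lra.
    rewrite ler0_norm; lra.
  - move: h1; rewrite ge_max => /andP [h1 h3]; split.
      by rewrite ler_distlC; apply/andP; split; lra.
    rewrite ger0_norm; lra.
case: nF => N [mN muN FN].
pose B := cball z (rho / 2).
have rho20 : 0 < rho / 2 by lra.
have B0 : (0 < mu B)%E by apply: Kz.
have Bfin : mu B \is a fin_num.
  by rewrite ge0_fin_numE ?measure_ge0 //; apply: lf.
have sub : B `<=` N `|` (B `&` cball p r).
  move=> w Bw; case: (leP `|w - p| r) => h; first by right.
  left; apply: FN; move: Bw; rewrite /B /cball /= distrC ler_distlC => /andP [h1 h2].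
  case: (leP (w - p) 0) => h3.
    left; rewrite /= in_itv /= h1 /= le_min h2 andbT.
    move: h; rewrite ler0_norm //; lra.
  right; rewrite /= in_itv /= h2 andbT ge_max h1 andbT.
  move: h; rewrite gtr0_norm //; lra.
have := dec (rho / 2) z p (4 * al) rho20 _ Kz _.
have h1 : rho / 2 <= rho0 by lra.
have h2 : 0 < 4 * al by lra.
move=> /(_ h1 h2); rewrite -/B -/r => hlt.
have : (mu B <= mu (B `&` cball p r))%E.
  apply: (le_trans (le_measure _ _ _ sub)); rewrite ?inE.
  - exact: cball_meas.
  - by apply: measurableU => //; apply: measurableI; exact: cball_meas.
  apply: (le_trans (measureU2 _ _ _)) => //.
    by apply: measurableI; exact: cball_meas.
  rewrite [X in (X + _)%E](_ : _ = 0%E); first by rewrite add0e.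
  exact: muN.
move=> /(le_lt_trans) /(_ hlt).
rewrite -(fineK Bfin) -EFinM lte_fin.
have : 0 <= fine (mu B) by apply: fine_ge0; apply: measure_ge0.
nra.
Qed.

Lemma C_gt1 (C gam : R) z : locally_finite mu -> abs_decaying mu C gam ->
  msupport mu z -> 1 < C.
Proof.
move=> lf [rho0 [rho00 dec]] Kz.
have := dec rho0 z z 1 rho00 (lexx _) Kz ltr01.
rewrite mul1r setIid powR1.
have B0 : (0 < mu (cball z rho0))%E by apply: Kz.
have Bfin : mu (cball z rho0) \is a fin_num.
  by rewrite ge0_fin_numE ?measure_ge0 //; apply: lf.
move: B0; rewrite -(fineK Bfin) -EFinM !lte_fin mulr1; nra.
Qed.

Lemma alpha_bounds (C gam al : R) : 1 < C -> 0 < gam -> 0 < al ->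
  al <= 4^-1 * ((3 * C)^-1) `^ (gam^-1) ->
  C * (4 * al) `^ gam <= 1 /\ al <= 4^-1.
Proof.
move=> C1 g0 a0 ale.
have X0 : 0 <= ((3 * C)^-1) `^ (gam^-1) by apply: powR_ge0.
have h4 : 4 * al <= ((3 * C)^-1) `^ (gam^-1) by lra.
have hp : (4 * al) `^ gam <= (3 * C)^-1.
  have := @ge0_ler_powR _ gam (ltW g0) (4 * al) _ _ _ h4.
  rewrite /= -powRrM mulVf ?gt_eqF // powRr1; last first.
    by rewrite invr_ge0; lra.
  apply; rewrite nnegrE //; lra.
have C3 : C * (3 * C)^-1 = 3^-1 by field; lra.
have hC : C * (4 * al) `^ gam <= 3^-1.
  by rewrite -C3; apply: ler_wpM2l => //; lra.
split; first lra.
case: (lerP 1 (4 * al)) => h; last lra.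
have := @ge0_ler_powR _ gam (ltW g0) 1 (4 * al) _ _ h.
rewrite /= powR1 => /(_ _ _) => H.
have : 1 <= (4 * al) `^ gam by apply: H; rewrite nnegrE; lra.
have : (3 * C)^-1 < 1 by rewrite invf_lt1; lra.
lra.
Qed.
End S.

Section B.
Variable R : realType.
Lemma bil_facts (phi : R -> R) : bi_Lipschitz phi -> exists L : R, 1 <= L /\
  (forall u v, `|phi u - phi v| <= L * `|u - v|) /\
  (forall u v, `|u - v| <= L * `|phi u - phi v|).
Proof.
move=> [L [L1 H]]; exists L; split => //; split => u v.
  case: (eqVneq u v) => [->|uv]; first by rewrite !subrr normr0 mulr0.
  have := H u v uv => /andP [_ h].
  have d0 : 0 < `|u - v| by rewrite normr_gt0 subr_eq0.
  by move: h; rewrite ler_pdivrMr.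
case: (eqVneq u v) => [->|uv]; first by rewrite !subrr normr0 mulr_ge0 // ltW //; lra.
have := H u v uv => /andP [h _].
have d0 : 0 < `|u - v| by rewrite normr_gt0 subr_eq0.
move: h; rewrite ler_pdivlMr // => h.
have L0 : 0 < L by lra.
have e : `|u - v| = L * (L^-1 * `|u - v|) by field; lra.
rewrite e; apply: ler_wpM2l => //; lra.
Qed.

Lemma lip_cont (phi : R -> R) (L : R) : 0 < L ->
  (forall u v, `|phi u - phi v| <= L * `|u - v|) -> continuous phi.
Proof.
move=> L0 H x; apply/cvgrPdist_lt => e e0.
near=> t.
apply: (le_lt_trans (H x t)).
rewrite -ltr_pdivlMl //.
near: t.
apply/nbhs_ballP; exists (e / L) => /=; first exact: divr_gt0.
by move=> t; rewrite /ball /= mulrC.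
Unshelve. all: by end_near.
Qed.

Lemma bil_surj (phi : R -> R) : bi_Lipschitz phi -> forall w, exists u, phi u = w.
Proof.
move=> /bil_facts [L [L1 [H1 H2]]] w.
have L0 : 0 < L by lra.
have cphi := @lip_cont phi L L0 H1.
pose M := L * (`|w - phi 0| + 1).
have M0 : 0 < M by apply: mulr_gt0 => //; rewrite ltr_pwDr // normr_ge0.
have hM : forall t, `|t| = M -> `|w - phi 0| < `|phi t - phi 0|.
  move=> t ht; have := H2 t 0; rewrite subr0 ht /M => h.
  have : `|w - phi 0| + 1 <= `|phi t - phi 0|.
    by rewrite -(ler_pM2l L0).
  lra.
have inj : {in `[- M, M] &, injective phi}.
  move=> u v _ _ e; apply/eqP; rewrite -subr_eq0 -normr_eq0.
  have := H2 u v; rewrite e subrr normr0 mulr0 => h.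
  by rewrite eq_le h normr_ge0.
have ct : {within [set` `[- M, M]], continuous phi}.
  by apply: continuous_subspaceT => t; apply: cphi.
have mM : - M <= M by lra.
have [mo|mo] := itv_continuous_inj_mono ct inj.
- have a1 : phi (- M) < phi 0.
    by apply: mo; rewrite ?in_itv /=; lra.
  have a2 : phi 0 < phi M.
    by apply: mo; rewrite ?in_itv /=; lra.
  have b1 := hM (- M); rewrite normrN gtr0_norm // in b1.
  have b2 := hM M; rewrite gtr0_norm // in b2.
  have {b1}b1 := b1 erefl; have {b2}b2 := b2 erefl.
  move: b1 b2; rewrite (ltr0_norm (x := phi (- M) - phi 0)) ?subr_lt0 //.
  rewrite (gtr0_norm (x := phi M - phi 0)) ?subr_gt0 // => b1 b2.
  have [c _ <-] : exists2 c, c \in `[- M, M] & phi c = w.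
    apply: IVT => //; rewrite ge_min le_max; apply/andP; split.
      apply/orP; left; move: b1; rewrite ltr_norml; lra.
    apply/orP; right; move: b2; rewrite ltr_norml; lra.
  by exists c.
- have a1 : phi 0 < phi (- M).
    by apply: mo; rewrite ?in_itv /=; lra.
  have a2 : phi M < phi 0.
    by apply: mo; rewrite ?in_itv /=; lra.
  have b1 := hM (- M); rewrite normrN gtr0_norm // in b1.
  have b2 := hM M; rewrite gtr0_norm // in b2.
  have {b1}b1 := b1 erefl; have {b2}b2 := b2 erefl.
  move: b1 b2; rewrite (gtr0_norm (x := phi (- M) - phi 0)) ?subr_gt0 //.
  rewrite (ltr0_norm (x := phi M - phi 0)) ?subr_lt0 // => b1 b2.
  have [c _ <-] : exists2 c, c \in `[- M, M] & phi c = w.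
    apply: IVT => //; rewrite ge_min le_max; apply/andP; split.
      apply/orP; right; move: b2; rewrite ltr_norml; lra.
    apply/orP; left; move: b1; rewrite ltr_norml; lra.
  by exists c.
Qed.
End B.

Section D.
Variable R : realType.
Variables (b : nat) (c y : R).
Hypothesis b2 : (2 <= b)%N.

Lemma bR_gt0 : 0 < (b%:R : R).
Proof. by rewrite ltr0n; apply: leq_trans b2. Qed.
Lemma bX_gt0 n : 0 < (b%:R : R) ^+ n.
Proof. by apply: exprn_gt0; apply: bR_gt0. Qed.

Definition cn n : R := iter n (fbc b c) 0.
Definition qq n (k : int) : R := (y + k%:~R - cn n) / (b%:R ^+ n).

Lemma iter_aff n u : iter n (fbc b c) u = (b%:R)^+n * u + cn n.
Proof.
rewrite /cn; elim: n => [|n IH] /=; first by rewrite expr0 mul1r addr0.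
by rewrite IH /fbc exprS; ring.
Qed.

Lemma bad_q n u (k : int) eps :
  `|iter n (fbc b c) u - y - k%:~R| < eps -> `|u - qq n k| < eps / (b%:R ^+ n).
Proof.
have h := bX_gt0 n.
have e : iter n (fbc b c) u - y - k%:~R = (b%:R ^+ n) * (u - qq n k).
  by rewrite iter_aff /qq; field; rewrite gt_eqF.
rewrite e normrM (gtr0_norm h) => H.
by rewrite ltr_pdivlMr // mulrC.
Qed.

Lemma sep_t (t : R) : exists2 d : R, 0 < d &
  forall m : int, t + m%:~R != 0 -> d <= `|t + m%:~R|.
Proof.
pose fr := t - (Num.floor t)%:~R.
have fr0 : 0 <= fr by rewrite /fr subr_ge0 floor_le.
have fr1 : fr < 1 by have := floorD1_gt t; rewrite intrD /fr; lra.
pose d := if fr == 0 then 1 else Num.min fr (1 - fr).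
have d0 : 0 < d.
  rewrite /d; case: eqP => h; first lra.
  by rewrite lt_min; apply/andP; split; lra.
have d1 : d <= 1 - fr.
  rewrite /d; case: eqP => [->|_]; first lra.
  by rewrite ge_min lexx orbT.
have dfr : fr != 0 -> d <= fr by rewrite /d => /negPf ->; rewrite ge_min lexx.
exists d => // m nz.
have e : t + m%:~R = fr + (Num.floor t + m)%:~R by rewrite /fr intrD; ring.
rewrite e; rewrite e in nz.
set z := (Num.floor t + m) in nz *.
have : (1 <= z) || (z == 0) || (z <= -1) by lia.
move=> /orP [/orP [z1|/eqP z0]|zm].
- have : 1 <= (z%:~R : R) by rewrite ler1z.
  move=> hz; rewrite ger0_norm; lra.
- move: nz; rewrite z0 addr0 => nz.
  by rewrite ger0_norm //; apply: dfr.
- have : (z%:~R : R) <= -1 by rewrite -(intrN _ 1) ler_int.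
  move=> hz; rewrite ler0_norm; lra.
Qed.

Definition TT j : R := y - iter j (fbc b c) y.

Lemma sep_N N : exists2 d : R, 0 < d &
  forall j, (j <= N)%N -> forall m : int, TT j + m%:~R != 0 -> d <= `|TT j + m%:~R|.
Proof.
elim: N => [|N [d d0 IH]].
  have [d d0 H] := sep_t (TT 0); exists d => // j; rewrite leqn0 => /eqP ->; exact: H.
have [d' d'0 H] := sep_t (TT N.+1).
exists (Num.min d d'); first by rewrite lt_min d0 d'0.
move=> j; rewrite leq_eqVlt => /orP [/eqP ->|jN] m nz.
  by rewrite ge_min (H m nz) orbT.
by rewrite ge_min (IH j jN m nz).
Qed.

Lemma q_diff n j k k' : (b%:R ^+ (n + j)) * (qq (n + j) k' - qq n k)
  = TT j + (k' - (b ^ j)%:Z * k)%:~R.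
Proof.
have h1 := bX_gt0 n; have h2 := bX_gt0 j.
have e1 : cn (n + j) = b%:R ^+ j * cn n + cn j.
  by rewrite /cn addnC iterD iter_aff.
rewrite /qq /TT e1 iter_aff intrB intrM /=.
have -> : ((b ^ j)%N%:~R : R) = b%:R ^+ j by rewrite -natrX.
rewrite exprD; field; rewrite ?gt_eqF //.
Qed.

Lemma uniq_q N d n j k k' : 0 < d ->
  (forall j, (j <= N)%N -> forall m : int, TT j + m%:~R != 0 -> d <= `|TT j + m%:~R|) ->
  (j <= N)%N -> `|qq (n + j) k' - qq n k| < d / (b%:R ^+ (n + j)) ->
  qq (n + j) k' = qq n k.
Proof.
move=> d0 H jN hlt.
have h := bX_gt0 (n + j).
have e := q_diff n j k k'.
case: (eqVneq (TT j + (k' - (b ^ j)%:Z * k)%:~R) 0) => [z|nz].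
  apply/eqP; rewrite -subr_eq0; move: z; rewrite -e => /eqP.
  by rewrite mulf_eq0 (gt_eqF h).
have := H j jN _ nz; rewrite -e normrM (gtr0_norm h).
move: hlt; rewrite ltr_pdivlMr // => hlt hle.
exfalso; move: hle; rewrite mulrC => hle; lra.
Qed.
End D.

Section W.
Variable R : realType.
Lemma win (t A v : R) : 0 < t -> t < 1 -> 0 < v -> v <= A ->
  exists m : nat, A * t ^+ m.+1 < v /\ v <= A * t ^+ m.
Proof.
move=> t0 t1 v0 vA.
have A0 : 0 < A by lra.
have tn : `|t| < 1 by rewrite gtr0_norm.
have [M _ HM] := cvgr_dist_lt _ _ (cvg_expr tn) _ (divr_gt0 v0 A0).
have ex : exists n, A * t ^+ n < v.
  exists M; have := HM M (leqnn M); rewrite /= sub0r normrN.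
  rewrite ger0_norm; last by apply: exprn_ge0; apply: ltW.
  by rewrite ltr_pdivlMr // mulrC.
have exb : exists n, (fun n => A * t ^+ n < v) n by [].
case: (ex_minnP exb) => M0 h hmin.
case: M0 h hmin => [|m] h hmin.
  by move: h; rewrite expr0 mulr1; lra.
exists m; split => //.
case: (lerP v (A * t ^+ m)) => // h'.
by have := hmin m h'; rewrite ltnn.
Qed.

Lemma head_mkseq (T : Type) (f : nat -> T) k x0 : head x0 (mkseq f k.+1) = f 0%N.
Proof. by []. Qed.
Lemma last_mkseq (T : Type) (f : nat -> T) k x0 : last x0 (mkseq f k.+1) = f k.
Proof. by rewrite (last_nth x0) size_mkseq /= nth_mkseq. Qed.
End W.

Section G.
Variable R : realType.
Variable mu : {measure set R -> \bar R}.
Variables (C gam al beta rho0 L d : R) (phi : R -> R) (b N : nat) (c y : R).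
Hypothesis lf : locally_finite mu.
Hypothesis decH : forall (rho x y eps : R), 0 < rho -> rho <= rho0 -> msupport mu x ->
      0 < eps ->
      (mu (cball x rho `&` cball y (eps * rho))
        < (C * eps `^ gam)%:E * mu (cball x rho))%E.
Hypothesis rho00 : 0 < rho0.
Hypothesis al0 : 0 < al.
Hypothesis al4 : al <= 4^-1.
Hypothesis Cal : C * (4 * al) `^ gam <= 1.
Hypothesis beta0 : 0 < beta.
Hypothesis beta1 : beta < 1.
Hypothesis L1 : 1 <= L.
Hypothesis H1 : forall u v, `|phi u - phi v| <= L * `|u - v|.
Hypothesis H2 : forall u v, `|u - v| <= L * `|phi u - phi v|.
Hypothesis bil : bi_Lipschitz phi.
Hypothesis b2 : (2 <= b)%N.
Hypothesis bN : (al * beta)^-1 <= (b%:R) ^+ N.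
Hypothesis d0 : 0 < d.
Hypothesis dH : forall j, (j <= N)%N -> forall m : int,
   TT R b c y j + m%:~R != 0 -> d <= `|TT R b c y j + m%:~R|.

Let K := msupport mu.
Ltac ctx := move: (L1) (al0) (al4) (beta0) (beta1) (rho00) (d0) => ? ? ? ? ? ? ?.

Definition kap (r1 : R) : R := (al * beta * rho0)^-1 + r1^-1 + 4 * L / (d * al * beta).
Definition vb n : R := ((b%:R : R) ^+ n)^-1.
Definition threat (ka z rho : R) n k := ka * al * beta * rho < vb n /\ vb n <= ka * rho /\
   `|phi (qq R b c y n k) - z| <= 2 * rho.
Definition Good (ka z rho w : R) := K w /\ `|z - w| <= (1 - al) * rho /\
   forall n k, threat ka z rho n k -> 2 * al * rho <= `|w - phi (qq R b c y n k)|.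
Definition sigma : strategy R := fun s =>
  let r1 := (head (0, 0) s).2 in let zr := last (0, 0) s in
  match pselect (exists w, Good (kap r1) zr.1 zr.2 w) with
  | left e => (projT1 (cid e), al * zr.2)
  | right _ => (zr.1, al * zr.2) end.

Lemma vb_gt0 n : 0 < vb n.
Proof. by rewrite /vb invr_gt0; apply: exprn_gt0; rewrite ltr0n; apply: leq_trans b2. Qed.

Lemma vbD n j : vb (n + j) = vb n * vb j.
Proof. by rewrite /vb exprD invfM. Qed.

Lemma uniq_threat_le ka z rho n n' k k' : 0 < rho ->
  4 * L / (d * al * beta) <= ka ->
  threat ka z rho n k -> threat ka z rho n' k' -> (n <= n')%N ->
  qq R b c y n k = qq R b c y n' k'.
Proof.
move=> rho0' kaL [w1 [w2 w3]] [w1' [w2' w3']] nn'; ctx.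
have P0 : 0 < al * beta by apply: mulr_gt0.
have ka0 : 0 < ka.
  have q1 : 0 < 4 * L by lra.
  have q2 : 0 < d * al * beta by rewrite -mulrA; apply: mulr_gt0.
  have := divr_gt0 q1 q2; lra.
pose j := (n' - n)%N.
have en' : n' = (n + j)%N by rewrite /j subnKC.
rewrite en' in w1' w2' w3' *.
have vj : al * beta < vb j.
  have hv := vb_gt0 n.
  move: w1'; rewrite vbD => w1'.
  have : al * beta * vb n < vb n * vb j.
    apply: le_lt_trans w1'.
    have : al * beta * vb n <= al * beta * (ka * rho) by apply: ler_wpM2l; lra.
    lra.
  rewrite mulrC; rewrite ltr_pM2l //.
have jN : (j <= N)%N.
  have : (b%:R : R) ^+ j < (b%:R) ^+ N.
    apply: lt_le_trans bN.
    have bj0 : 0 < (b%:R : R) ^+ j by apply: exprn_gt0; rewrite ltr0n; apply: leq_trans b2.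
    move: vj; rewrite /vb -(ltr_pM2r bj0) mulVf ?gt_eqF // => h.
    rewrite -(ltr_pM2l P0) mulfV ?gt_eqF //.
  rewrite -!natrX ltr_nat ltn_exp2l //; first by move/ltnW.
symmetry; apply: (@uniq_q R b c y b2 N d n j k k' d0 dH jN).
apply: (le_lt_trans (H2 _ _)).
have h4 : `|phi (qq R b c y (n + j) k') - phi (qq R b c y n k)| <= 4 * rho.
  have := ler_distD z (phi (qq R b c y (n + j) k')) (phi (qq R b c y n k)).
  rewrite (distrC z) ; lra.
have : L * `|phi (qq R b c y (n + j) k') - phi (qq R b c y n k)| <= L * (4 * rho).
  apply: ler_wpM2l => //; lra.
suff : L * (4 * rho) < d / b%:R ^+ (n + j) by lra.
rewrite -/(vb (n + j)).
have kd : 4 * L <= ka * (d * al * beta).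
  by rewrite -ler_pdivrMr // -mulrA; apply: mulr_gt0.
have : d * (ka * al * beta * rho) < d * vb (n + j) by rewrite ltr_pM2l.
have : 4 * L * rho <= ka * (d * al * beta) * rho by rewrite ler_pM2r.
have e1 : d * (ka * al * beta * rho) = ka * (d * al * beta) * rho by ring.
rewrite /vb mulrC; lra.
Qed.

Lemma uniq_threat ka z rho n n' k k' : 0 < rho ->
  4 * L / (d * al * beta) <= ka ->
  threat ka z rho n k -> threat ka z rho n' k' ->
  qq R b c y n k = qq R b c y n' k'.
Proof.
move=> r0 kaL t1 t2; case: (leqP n n') => h.
  exact: (uniq_threat_le _ _ _ _ _ _ _ r0 kaL t1 t2 h).
by symmetry; apply: (uniq_threat_le _ _ _ _ _ _ _ r0 kaL t2 t1); apply: ltnW.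
Qed.

Lemma sigma_r s : (sigma s).2 = al * (last (0, 0) s).2.
Proof. by rewrite /sigma; case: pselect. Qed.

Lemma sigma_legal s : K (last (0, 0) s).1 -> 0 <= (last (0, 0) s).2 ->
  K (sigma s).1 /\ ball_le (sigma s) (last (0, 0) s).
Proof.
move=> Kz r0; ctx; rewrite /sigma; case: pselect => [e|_].
  case: (cid e) => w [Kw [hw _]] /=; split => //; rewrite /ball_le /=.
  apply: (le_trans (lerD (lexx _) hw)); rewrite -mulrDl addrC subrK mul1r //.
split => //; rewrite /ball_le /= subrr normr0 addr0; apply: ler_piMl => //; lra.
Qed.

Lemma sigma_good s :
  (exists w, Good (kap (head (0, 0) s).2) (last (0, 0) s).1 (last (0, 0) s).2 w) ->
  Good (kap (head (0, 0) s).2) (last (0, 0) s).1 (last (0, 0) s).2 (sigma s).1.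
Proof.
rewrite /sigma; case: pselect => [e|ne] ex; last by exfalso; apply: ne.
by case: (cid e).
Qed.

Lemma radii omega n : bob_legal_upto K beta sigma omega n ->
  forall j, (j <= n)%N -> (omega j).2 = (al * beta) ^+ j * (omega 0%N).2.
Proof.
move=> [_ [_ hj]]; elim => [|j IH] jn; first by rewrite expr0 mul1r.
have [_ [_ e]] := hj j jn.
rewrite e /alice_move sigma_r last_mkseq IH; last by apply: ltnW.
by rewrite exprS; ring.
Qed.

Lemma alice_legal_ok : alice_legal K al beta sigma.
Proof.
move=> omega n hl.
have Kn : K (omega n).1.
  case: n hl => [|m] hl; first by case: hl.
  by have [_ [_ hj]] := hl; exact: (hj m (ltnSn m)).1.
have r0 : 0 <= (omega n).2.
  rewrite (radii _ _ hl n (leqnn n)); apply: mulr_ge0.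
    by apply: exprn_ge0; apply: mulr_ge0; apply: ltW.
  by case: hl => _ [/ltW].
have := @sigma_legal (mkseq omega n.+1); rewrite last_mkseq => /(_ Kn r0) [h1 h2].
split => //; split => //.
by rewrite /alice_move sigma_r last_mkseq.
Qed.

Lemma alice_wins_ok : alice_wins K beta sigma (phi @` E_lift b c y `&` K).
Proof.
move=> omega hl x Kx hx; split => //.
ctx.
set r0 := (omega 0%N).2.
have r00 : 0 < r0 by have [_ []] := hl 0%N.
have rad k : (omega k).2 = (al * beta) ^+ k * r0 by apply: (radii _ _ (hl k) k (leqnn k)).
have [u eu] := @bil_surj R phi bil x.
exists u => //.
move=> Hor.
set ka := kap r0.
have P0 : 0 < al * beta by apply: mulr_gt0.
have t1 : 0 < (al * beta * rho0)^-1 by rewrite invr_gt0; apply: mulr_gt0.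
have t2 : 0 < r0^-1 by rewrite invr_gt0.
have t3 : 0 < 4 * L / (d * al * beta).
  apply: divr_gt0; first lra.
  by rewrite -mulrA; apply: mulr_gt0.
have kaL : 4 * L / (d * al * beta) <= ka by rewrite /ka /kap; lra.
have ka1 : r0^-1 <= ka by rewrite /ka /kap; lra.
have ka2 : (al * beta * rho0)^-1 <= ka by rewrite /ka /kap; lra.
have ka0 : 0 < ka by lra.
set eps := al / (2 * L * ka).
have eps0 : 0 < eps by apply: divr_gt0 => //; apply: mulr_gt0 => //; lra.
have [n [k hk]] := Hor eps eps0.
have hq := @bad_q R b c y b2 _ _ _ _ hk.
have vn0 := vb_gt0 n.
have vn1 : vb n <= 1.
  rewrite /vb invf_le1; last by apply: exprn_gt0; rewrite ltr0n; apply: leq_trans b2.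
  by apply: exprn_ege1; rewrite ler1n; apply: leq_trans b2.
have kr1 : 1 <= ka * r0.
  have : r0^-1 * r0 <= ka * r0 by rewrite ler_pM2r.
  by rewrite mulVf ?gt_eqF.
have ab1 : al * beta < 1.
  have : al * beta <= al by rewrite ler_piMr //; lra.
  lra.
have [m [wm1 wm2]] := @win R _ _ _ P0 ab1 vn0 (le_trans vn1 kr1).
set rm := (omega m).2.
have erm : rm = (al * beta) ^+ m * r0 by rewrite /rm rad.
have rm0 : 0 < rm by rewrite erm; apply: mulr_gt0 => //; apply: exprn_gt0.
have wm2' : vb n <= ka * rm by rewrite erm mulrCA mulrA; move: wm2; rewrite mulrC mulrA.
have wm1' : ka * al * beta * rm < vb n.
  by move: wm1; rewrite erm exprSr; congr (_ < _); ring.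
have rmle : rm <= rho0.
  have h1 : ka * al * beta * rm < 1 by lra.
  have h2 : (al * beta * rho0)^-1 * (al * beta * rm) <= ka * (al * beta * rm).
    by rewrite ler_pM2r //; apply: mulr_gt0.
  have e2 : (al * beta * rho0)^-1 * (al * beta * rm) = rm / rho0.
    by field; rewrite ?gt_eqF //.
  have : rm / rho0 < 1.
    rewrite -e2; apply: le_lt_trans h2 _; move: h1; rewrite !mulrA //.
  by rewrite ltr_pdivrMr // mul1r => /ltW.
set p := phi (qq R b c y n k).
have Kom j : K (omega j).1.
  case: j => [|j]; first by case: (hl 0%N).
  by have [_ [_ hj]] := hl j.+1; exact: (hj j (ltnSn j)).1.
have hxp : `|x - p| < al * rm / 2.
  rewrite -eu; apply: (le_lt_trans (H1 _ _)).
  have : L * `|u - qq R b c y n k| < L * (eps / b%:R ^+ n).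
    by rewrite ltr_pM2l //; lra.
  move=> h; apply: (lt_le_trans h).
  have e3 : L * (eps / b%:R ^+ n) = (al / (2 * ka)) * vb n.
    rewrite /eps /vb; field.
    rewrite !gt_eqF //; [lra|exact: (@bX_gt0 R b b2 n)].
  rewrite e3.
  have e4 : al * rm / 2 = (al / (2 * ka)) * (ka * rm).
    by field; rewrite !gt_eqF.
  rewrite e4; apply: ler_wpM2l => //.
  by apply: ltW; apply: divr_gt0 => //; lra.
have thr : threat ka (omega m).1 rm n k.
  split => //; split => //.
  have := hx m; rewrite -/rm => hxm.
  have := ler_distD x p (omega m).1.
  rewrite (distrC p x) => h.
  have : al * rm / 2 <= rm by rewrite ler_pdivrMr //; nra.
  rewrite -/p; lra.
have [w [Kw [hw1 hw2]]] := @avoid_pt R mu C gam al rho0 lf decH al0 Cal _ _ p (Kom m) rm0 rmle.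
have Gw : Good ka (omega m).1 rm w.
  split => //; split.
    rewrite distrC.
    have : al * rm <= rm / 2 by rewrite ler_pdivlMr //; nra.
    move: hw1; rewrite -/rm mulrBl mul1r; lra.
  move=> n' k' thr'.
  by rewrite -(uniq_threat _ _ _ _ _ _ _ rm0 kaL thr thr').
have := @sigma_good (mkseq omega m.+1).
rewrite head_mkseq last_mkseq -/r0 -/ka -/rm => /(_ (ex_intro _ w Gw)).
move=> [_ [_ GA]].
have hA := GA n k thr.
have [_ [_ hj]] := hl m.+1.
have [_ [bl _]] := hj m (ltnSn m).
move: bl; rewrite /ball_le /alice_move sigma_r last_mkseq -/rm => bl.
have hxm := hx m.+1.
have := ler_distD (omega m.+1).1 x (sigma (mkseq omega m.+1)).1.
rewrite (distrC (omega m.+1).1 (sigma (mkseq omega m.+1)).1) => h3.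
have := ler_distD x (sigma (mkseq omega m.+1)).1 p.
rewrite (distrC (sigma (mkseq omega m.+1)).1 x) => h4.
have : al * rm / 2 < al * rm by rewrite ltr_pdivrMr //; nra.
lra.
Qed.
End G.

Theorem corollary4p3 (R : realType) (mu : {measure set R -> \bar R})
    (C gam alpha : R) :
  0 < C -> 0 < gam ->
  locally_finite mu -> abs_decaying mu C gam ->
  0 < alpha -> alpha <= 4^-1 * ((3 * C)^-1) `^ (gam^-1) ->
  forall phi : R -> R, bi_Lipschitz phi ->
  forall b : nat, (2 <= b)%N ->
  forall c y : R,
    alpha_winning_on (msupport mu) alpha (phi @` E_lift b c y).
Proof.
move=> C0 g0 lf dec al0 alb phi bil b b2 c y beta be0 be1.
case: (pselect (exists z, msupport mu z)) => [[z Kz]|nK]; last first.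
  exists (fun _ => (0, 0)); split.
    by move=> omega n [K0 _]; exfalso; apply: nK; exists (omega 0%N).1.
  by move=> omega _ x Kx; exfalso; apply: nK; exists x.
have C1 := @C_gt1 R mu C gam z lf dec Kz.
have [Cal al4] := @alpha_bounds R C gam alpha C1 g0 al0 alb.
have [rho0 [rho00 decH]] := dec.
have [L [L1 [H1 H2]]] := @bil_facts R phi bil.
have P0 : 0 < alpha * beta by apply: mulr_gt0.
have [N bN] : exists N : nat, (alpha * beta)^-1 <= (b%:R : R) ^+ N.
  have X0 : 0 <= (alpha * beta)^-1 by rewrite invr_ge0 ltW.
  exists (Num.bound (alpha * beta)^-1).
  apply: (le_trans (ltW (archi_boundP X0))).
  rewrite -natrX ler_nat; apply: ltnW; apply: ltn_expl; exact: b2.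
have [d d0 dH] := @sep_N R b c y b2 N.
exists (@sigma R mu alpha beta rho0 L d phi b c y).
split.
  by apply: alice_legal_ok.
by apply: (@alice_wins_ok R mu C gam alpha beta rho0 L d phi b N c y).
Qed.
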